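(* For all $c>0$ and $t>0$, $$\log\Big(1+2c\sinh\frac{t}{2}\Big)\le \frac12\,\frac{t^2+(2c+1)t}{t+1}.$$ *)

(* Defs.v *)
From Stdlib Require Import Reals.

(* Main.v *)
Require Import Defs.
From Stdlib Require Import Reals.
From Stdlib Require Import Lra Psatz.
From Coquelicot Require Import Coquelicot.
Open Scope R_scope.

Lemma mono (f df : R -> R) :
  (forall x, 0 <= x -> is_derive f x (df x)) ->
  (forall x, 0 < x -> 0 < df x) -> forall t, 0 < t -> f 0 < f t.
Proof.
  intros Hd Hp t ht.
  destruct (MVT_cor2 f df 0 t ht) as [c [Hc1 Hc2]].
  { intros c Hc. apply is_derive_Reals. apply Hd. lra. }
  assert (0 < df c * (t - 0)) by (apply Rmult_lt_0_compat; [apply Hp; lra | lra]).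
  lra.
Qed.

Definition T4 t := 1 - t + t^2/2 - t^3/6 + t^4/24.
Definition T5 t := T4 t - t^5/120.

Lemma ebounds t : 0 < t -> T5 t < exp (-t) /\ exp (-t) < T4 t.
Proof.
  intros ht.
  assert (H0 : forall x, 0 < x -> exp (-x) < 1).
  { intros x hx. rewrite <- exp_0. apply exp_increasing. lra. }
  assert (H1 : forall x, 0 < x -> 0 < exp (-x) - 1 + x).
  { intros x hx. set (f := fun x => exp (-x) - 1 + x).
    change (0 < f x). replace 0 with (f 0) by (unfold f; rewrite Ropp_0, exp_0; field).
    apply (mono f (fun x => 1 - exp (-x))); auto.
    - intros y _. unfold f. auto_derive; [auto|]. change R in y. field.
    - intros y hy. specialize (H0 y hy). lra. }
  assert (H2 : forall x, 0 < x -> 0 < 1 - x + x^2/2 - exp (-x)).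
  { intros x hx. set (f := fun x => 1 - x + x^2/2 - exp (-x)).
    change (0 < f x). replace 0 with (f 0) by (unfold f; rewrite Ropp_0, exp_0; field).
    apply (mono f (fun x => exp (-x) - 1 + x)); auto.
    intros y _. unfold f. auto_derive; [auto|]. change R in y. field. }
  assert (H3 : forall x, 0 < x -> 0 < exp (-x) - (1 - x + x^2/2 - x^3/6)).
  { intros x hx. set (f := fun x => exp (-x) - (1 - x + x^2/2 - x^3/6)).
    change (0 < f x). replace 0 with (f 0) by (unfold f; rewrite Ropp_0, exp_0; field).
    apply (mono f (fun x => 1 - x + x^2/2 - exp (-x))); auto.
    intros y _. unfold f. auto_derive; [auto|]. change R in y. field. }
  assert (H4 : forall x, 0 < x -> 0 < T4 x - exp (-x)).
  { intros x hx. set (f := fun x => T4 x - exp (-x)).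
    change (0 < f x). replace 0 with (f 0) by (unfold f, T4; rewrite Ropp_0, exp_0; field).
    apply (mono f (fun x => exp (-x) - (1 - x + x^2/2 - x^3/6))); auto.
    intros y _. unfold f, T4. auto_derive; [auto|]. change R in y. field. }
  assert (H5 : forall x, 0 < x -> 0 < exp (-x) - T5 x).
  { intros x hx. set (f := fun x => exp (-x) - T5 x).
    change (0 < f x). replace 0 with (f 0) by (unfold f, T5, T4; rewrite Ropp_0, exp_0; field).
    apply (mono f (fun x => T4 x - exp (-x))); auto.
    intros y _. unfold f, T5, T4. auto_derive; [auto|]. change R in y. field. }
  specialize (H4 t ht). specialize (H5 t ht). lra.
Qed.

Lemma poly2 t : 0 <= t -> t <= 2 ->
  2*t*(1/2 - t/3 + t^2/8 - t^3/30 + t^4/120)^2 <= 1 - t/2 + t^2/6 - t^3/24.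
Proof. intros h1 h2.
set (B := 1/2 - t/3 + t^2/8 - t^3/30 + t^4/120).
assert (HC: 1/3 <= 1 - t/2 + t^2/6 - t^3/24) by nra.
assert (Ht3 : t^3 <= 8) by (simpl; nra).
assert (HB0: 0 <= B) by (unfold B; nra).
assert (HB1: B <= 1/2 - 14/100*t).
{ unfold B. assert (0 <= t*(2-t)) by nra. assert (0<= t*t*(2-t)) by nra. nra. }
assert (0 <= 1/2 - 14/100*t) by lra.
assert (B^2 <= (1/2 - 14/100*t)^2) by nra.
assert (2*t*(1/2 - 14/100*t)^2 <= 1/3). { assert (0 <= (t-6/5)*(t-6/5)*(2-t)) by (apply Rmult_le_pos; [apply Rle_0_sqr|lra]). assert (0 <= (t-6/5)*(t-6/5)) by apply Rle_0_sqr. nra. }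
nra. Qed.

Lemma key t : 0 < t ->
  (1 - exp (-t) * (1 + t))^2 <= t^2 * (1 - exp (-t)) / 2.
Proof.
  intros ht.
  set (E := exp (-t)).
  assert (HE0 : 0 < E) by apply exp_pos.
  assert (Het : 1 + t < exp t) by (apply exp_ineq1; lra).
  assert (HEe : E * exp t = 1).
  { unfold E. rewrite <- exp_plus. replace (-t + t) with 0 by ring. apply exp_0. }
  assert (HA0 : E * (1 + t) <= 1) by nra.
  destruct (Rle_lt_dec t 2) as [h2|h2].
  - destruct (ebounds t ht) as [L U]. fold E in L, U. unfold T5, T4 in *.
    set (A := 1 - E * (1 + t)).
    set (B := 1/2 - t/3 + t^2/8 - t^3/30 + t^4/120).
    set (C := 1 - t/2 + t^2/6 - t^3/24).
    assert (HA : 0 <= A) by (unfold A; lra).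
    assert (HA5 : A <= t^2 * B).
    { unfold A, B. assert (0 <= 1 + t) by lra. nra. }
    assert (HC : t * C <= 1 - E) by (unfold C; lra).
    assert (HP := poly2 t (Rlt_le _ _ ht) h2). fold B C in HP.
    assert (A^2 <= (t^2*B)^2) by nra.
    assert ((t^2*B)^2 = t^3 * (t * B^2)) by ring.
    assert (t^3 * (2 * t * B^2) <= t^3 * C).
    { apply Rmult_le_compat_l; [|exact HP]. apply pow_le; lra. }
    assert (t^2 * (t * C) <= t^2 * (1 - E)).
    { apply Rmult_le_compat_l; [apply pow_le; lra| exact HC]. }
    nra.
  - assert (HE1 : E * (1 + t) < 1) by nra.
    assert (t^3 >= 2 + 2*t) by (simpl; nra).
    assert (0 <= 1 - E * (1 + t)) by lra.
    assert (0 <= E*(1+t)) by nra.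
    assert ((1 - E*(1+t))^2 <= 1) by (simpl; nra).
    assert (t^2 * (1 - E) * (1 + t) >= t^3) by nra.
    nra.
Qed.

Lemma ln_le_sub1 y : 0 < y -> ln y <= y - 1.
Proof.
  intros hy. rewrite <- (ln_exp (y - 1)). apply ln_le; auto.
  pose proof (exp_ineq1_le (y - 1)). lra.
Qed.

Theorem lemma3p6 (c t : R) (hc : 0 < c) (ht : 0 < t) :
  ln (1 + 2 * c * sinh (t / 2)) <= / 2 * ((t ^ 2 + (2 * c + 1) * t) / (t + 1)).
Proof.
  set (q := exp (-(t/2))). set (a := exp (t/2)).
  assert (Haq : a * q = 1).
  { unfold a, q. rewrite <- exp_plus. replace (t/2 + - (t/2)) with 0 by ring. apply exp_0. }
  assert (Hq0 : 0 < q) by apply exp_pos.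
  assert (Ha0 : 0 < a) by apply exp_pos.
  assert (Hq1 : q < 1).
  { unfold q. rewrite <- exp_0. apply exp_increasing. lra. }
  assert (HE : exp (-t) = q * q).
  { unfold q. rewrite <- exp_plus. f_equal. field. }
  set (b := 1 - q*q).
  assert (Hb : 0 < b) by (unfold b; nra).
  set (x := q + c * b).
  assert (Hx : 0 < x) by (unfold x; nra).
  assert (Hs : 1 + 2 * c * sinh (t / 2) = a * x).
  { unfold sinh, x, b. fold a q. replace (a * (q + c * (1 - q*q))) with (a*q + c*(a - (a*q)*q)) by ring.
    rewrite Haq. field. }
  rewrite Hs, ln_mult by auto. unfold a at 1. rewrite ln_exp.
  set (K := b * (t + 1) / t).
  assert (HK : 0 < K) by (unfold K; apply Rdiv_lt_0_compat; nra).
  assert (Hl : ln x <= x / K + K - 2).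
  { replace x with ((x / K) * K) at 1 by (field; lra).
    rewrite ln_mult; [| apply Rdiv_lt_0_compat; auto | auto].
    pose proof (ln_le_sub1 (x/K) ltac:(apply Rdiv_lt_0_compat; auto)).
    pose proof (ln_le_sub1 K HK). lra. }
  pose proof (key t ht) as Hk. rewrite HE in Hk.
  assert (Hk2 : (b * (t + 1) - t)^2 <= t^2 * (1 - q)).
  { replace (b * (t+1) - t) with (1 - q*q*(1+t)) by (unfold b; ring).
    assert (t^2 * (1 - q*q) / 2 <= t^2 * (1 - q)).
    { assert (0 <= t^2 * ((1-q)*(1-q))) by (apply Rmult_le_pos; [apply pow_le; lra|apply Rle_0_sqr]).
      assert (t^2 * (1 - q*q) / 2 - t^2 * (1 - q) = - (t^2 * ((1-q)*(1-q))) / 2) by field. lra. }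
    lra. }
  assert (Hfin : x / K + K - 2 <= c * t / (t + 1)).
  { assert (Heq : c * t / (t + 1) - (x / K + K - 2)
             = (t^2 * (1 - q) - (b * (t + 1) - t)^2) / (b * (t + 1) * t)).
    { unfold K, x. field. repeat split; nra. }
    assert (0 <= (t^2 * (1 - q) - (b * (t + 1) - t)^2) / (b * (t + 1) * t)).
    { apply Rdiv_le_0_compat; [lra|]. assert (0 < b * (t+1)) by nra. nra. }
    lra. }
  replace (/ 2 * ((t ^ 2 + (2 * c + 1) * t) / (t + 1))) with (t/2 + c * t / (t + 1))
    by (field; lra).
  lra.
Qed.
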